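(* Let $\xi$ be a Hausdorff convergence. Then $\xi$ is symmetrizable if and only if $\xi$ is sequential and $\mathrm{I}_1\xi$ is a semi-metrizable pretopology.
   Context: A convergence $\xi$ on a set $X$ is a relation between filters on $X$ and points, $x\in\lim_\xi\mathcal{F}$, with $\mathcal{F}\le\mathcal{G}\Rightarrow\lim_\xi\mathcal{F}\subset\lim_\xi\mathcal{G}$ and $x\in\lim_\xi\{x\}^\uparrow$; $\xi\ge\theta$ means $\lim_\xi\mathcal{F}\subset\lim_\theta\mathcal{F}$ for all $\mathcal{F}$. Hausdorff: each filter has at most one limit. A set $O$ is $\xi$-open if $\lim_\xi\mathcal{F}\cap O\ne\emptyset\Rightarrow O\in\mathcal{F}$; $\mathrm{T}\xi$ is the topology of $\xi$-open sets. $x\in\lim_{\mathrm{I}_1\xi}\mathcal{F}$ iff there is a countably based filter $\mathcal{H}\le\mathcal{F}$ with $x\in\lim_\xi\mathcal{H}$. $\xi$ is sequential if $\xi\ge\mathrm{T}\mathrm{I}_1\xi$. A semi-metric on $X$ is $d:X\times X\to[0,\infty)$ symmetric with $d(x,y)=0\iff x=y$; $\tilde d$ is the pretopology in which $\mathcal{F}$ converges to $x$ iff $\mathcal{F}$ contains all balls $B(x,\epsilon)=\{y:d(x,y)<\epsilon\}$, $\epsilon>0$. $\xi$ is semi-metrizable if $\xi=\tilde d$ for some semi-metric $d$, and symmetrizable if $\tilde d\ge\xi\ge\mathrm{T}\tilde d$ for some semi-metric $d$ on $X$. *)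

(* Defs.v *)
From Stdlib Require Import Reals Classical.
Open Scope R_scope.
Set Implicit Arguments.

Definition Family (X : Type) := (X -> Prop) -> Prop.

Definition is_filter {X : Type} (F : Family X) : Prop :=
  F (fun _ => True) /\
  (forall A B : X -> Prop, F A -> (forall x, A x -> B x) -> F B) /\
  (forall A B : X -> Prop, F A -> F B -> F (fun x => A x /\ B x)) /\
  ~ F (fun _ => False).

Definition filter_le {X : Type} (F G : Family X) : Prop :=
  forall A, F A -> G A.

Definition principal {X : Type} (x : X) : Family X := fun A => A x.

(* a limit relation: Lim xi F x  means  x \in lim_xi F *)
Definition Lim (X : Type) := Family X -> X -> Prop.

Definition is_convergence {X : Type} (xi : Lim X) : Prop :=
  (forall F G x, is_filter F -> is_filter G -> filter_le F G -> xi F x -> xi G x) /\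
  (forall x, xi (principal x) x).

Definition conv_ge {X : Type} (xi th : Lim X) : Prop :=
  forall F, is_filter F -> forall x, xi F x -> th F x.

Definition conv_eq {X : Type} (xi th : Lim X) : Prop :=
  conv_ge xi th /\ conv_ge th xi.

Definition hausdorff {X : Type} (xi : Lim X) : Prop :=
  forall F, is_filter F -> forall x y, xi F x -> xi F y -> x = y.

Definition is_open {X : Type} (xi : Lim X) (O : X -> Prop) : Prop :=
  forall F, is_filter F -> forall x, xi F x -> O x -> F O.

Definition Tmod {X : Type} (xi : Lim X) : Lim X :=
  fun F x => forall O, is_open xi O -> O x -> F O.

Definition countably_based {X : Type} (H : Family X) : Prop :=
  exists B : nat -> X -> Prop,
    forall A, H A <-> exists n, forall y, B n y -> A y.

Definition I1 {X : Type} (xi : Lim X) : Lim X :=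
  fun F x => exists H, is_filter H /\ countably_based H /\ filter_le H F /\ xi H x.

Definition sequential {X : Type} (xi : Lim X) : Prop := conv_ge xi (Tmod (I1 xi)).

Definition vicinity {X : Type} (xi : Lim X) (x : X) : Family X :=
  fun A => forall F, is_filter F -> xi F x -> F A.

Definition pretopology {X : Type} (xi : Lim X) : Prop :=
  forall x, xi (vicinity xi x) x.

Definition is_semimetric {X : Type} (d : X -> X -> R) : Prop :=
  (forall x y, 0 <= d x y) /\
  (forall x y, d x y = d y x) /\
  (forall x y, d x y = 0 <-> x = y).

Definition ball {X : Type} (d : X -> X -> R) (x : X) (eps : R) : X -> Prop :=
  fun y => d x y < eps.

Definition tilde {X : Type} (d : X -> X -> R) : Lim X :=
  fun F x => forall eps, 0 < eps -> F (ball d x eps).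

Definition semi_metrizable {X : Type} (xi : Lim X) : Prop :=
  exists d, is_semimetric d /\ conv_eq xi (tilde d).

Definition symmetrizable {X : Type} (xi : Lim X) : Prop :=
  exists d, is_semimetric d /\ conv_ge (tilde d) xi /\ conv_ge xi (Tmod (tilde d)).

(* Main.v *)
Require Import Defs.
From Stdlib Require Import Reals Classical.
From Stdlib Require Import Lra Lia ClassicalEpsilon.

Open Scope R_scope.

Definition rr (m : nat) : R := / (INR m + 1).

Lemma rr_pos m : 0 < rr m.
Proof. unfold rr. apply Rinv_0_lt_compat. pose proof (pos_INR m). lra. Qed.

Lemma rr_le m m' : (m <= m')%nat -> rr m' <= rr m.
Proof.
  intros H. unfold rr. apply Rinv_le_contravar.
  - pose proof (pos_INR m). lra.
  - apply le_INR in H. lra.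
Qed.

Lemma rr_small eps : 0 < eps -> exists m, rr m < eps.
Proof.
  intros He. destruct (INR_archimed eps 1 He) as [n Hn]. exists n.
  unfold rr. pose proof (pos_INR n).
  apply (Rmult_lt_reg_l (INR n + 1)). lra.
  rewrite Rinv_r by lra. nra.
Qed.

Definition ballF {X : Type} (d : X -> X -> R) (x : X) : Family X :=
  fun A => exists n, forall y, ball d x (rr n) y -> A y.

Lemma ballF_filter {X : Type} (d : X -> X -> R) x :
  is_semimetric d -> is_filter (ballF d x).
Proof.
  intros [H0 [Hs Hz]]. split; [|split; [|split]].
  - exists 0%nat. auto.
  - intros A B [n Hn] HAB. exists n. auto.
  - intros A B [n Hn] [m Hm]. exists (max n m). intros y Hy. split.
    + apply Hn. unfold ball in *. pose proof (rr_le n (max n m) ltac:(lia)). lra.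
    + apply Hm. unfold ball in *. pose proof (rr_le m (max n m) ltac:(lia)). lra.
  - intros [n Hn]. apply (Hn x). unfold ball. rewrite (proj2 (Hz x x) eq_refl).
    apply rr_pos.
Qed.

Lemma ballF_cb {X : Type} (d : X -> X -> R) x : countably_based (ballF d x).
Proof. exists (fun n => ball d x (rr n)). intros A. reflexivity. Qed.

Lemma ballF_tilde {X : Type} (d : X -> X -> R) x : tilde d (ballF d x) x.
Proof.
  intros eps He. destruct (rr_small eps He) as [m Hm]. exists m.
  unfold ball. intros y Hy. lra.
Qed.

Lemma I1_ge {X : Type} (xi : Lim X) : is_convergence xi -> conv_ge (I1 xi) xi.
Proof.
  intros [Hm _] F HF x [H [HH [_ [Hle Hx]]]]. exact (Hm H F x HH HF Hle Hx).
Qed.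

Definition seqF {X : Type} (y : nat -> X) : Family X :=
  fun A => exists N, forall n, (N <= n)%nat -> A (y n).

Lemma seqF_filter {X : Type} (y : nat -> X) : is_filter (seqF y).
Proof.
  split; [|split; [|split]].
  - exists 0%nat. auto.
  - intros A B [n Hn] HAB. exists n. auto.
  - intros A B [n Hn] [m Hm]. exists (max n m). intros k Hk. split.
    apply Hn; lia. apply Hm; lia.
  - intros [n Hn]. exact (Hn n (le_n n)).
Qed.

Lemma finite_min {X : Type} (d : X -> X -> R) z (y : nat -> X) N :
  (forall n, 0 < d z (y n)) -> exists del, 0 < del /\ forall n, (n < N)%nat -> del <= d z (y n).
Proof.
  intros Hp. induction N as [|N IH].
  - exists 1. split. lra. intros n Hn. lia.
  - destruct IH as [del [Hd Hn]]. exists (Rmin del (d z (y N))). split.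
    + apply Rmin_glb_lt; auto.
    + intros n Hlt. destruct (Nat.eq_dec n N) as [->|Hne].
      * apply Rmin_r.
      * eapply Rle_trans. apply Rmin_l. apply Hn. lia.
Qed.

Lemma key {X : Type} (xi : Lim X) (d : X -> X -> R)
  (Hconv : is_convergence xi) (Hhaus : hausdorff xi) (Hd : is_semimetric d)
  (H1 : conv_ge (tilde d) xi) (H2 : conv_ge xi (Tmod (tilde d))) :
  forall H x, is_filter H -> countably_based H -> xi H x -> tilde d H x.
Proof.
  intros H x HH [B HB] Hx.
  destruct Hd as [Hd0 [Hds Hdz]].
  apply NNPP. intros Hn. unfold tilde in Hn.
  apply not_all_ex_not in Hn. destruct Hn as [e0 Hn].
  apply imply_to_and in Hn. destruct Hn as [He0 Hnb].
  set (C := fun n y => forall k, (k <= n)%nat -> B k y).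
  assert (HC : forall n, H (C n)).
  { induction n as [|n IH].
    - destruct HH as [_ [Hup _]]. apply (Hup (B 0%nat)). apply HB. exists 0%nat. auto.
      intros y Hy k Hk. assert (k = 0%nat) by lia. subst. auto.
    - destruct HH as [_ [Hup [Hint _]]]. apply (Hup (fun y => C n y /\ B (S n) y)).
      apply Hint. auto. apply HB. exists (S n). auto.
      intros y [Hy1 Hy2] k Hk. destruct (Nat.eq_dec k (S n)) as [->|Hne]. auto.
      apply Hy1. lia. }
  assert (Hex : forall n, exists y, C n y /\ ~ ball d x e0 y).
  { intros n. apply NNPP. intros Hne. apply Hnb.
    destruct HH as [_ [Hup _]]. apply (Hup (C n)). auto.
    intros y Hy. apply NNPP. intros Hb. apply Hne. exists y. auto. }
  set (y := fun n => proj1_sig (constructive_indefinite_description _ (Hex n))).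
  assert (Hy : forall n, C n (y n) /\ ~ ball d x e0 (y n)).
  { intros n. unfold y. destruct (constructive_indefinite_description _ (Hex n)). auto. }
  assert (HS : filter_le H (seqF y)).
  { intros A HA. apply HB in HA. destruct HA as [n Hn]. exists n. intros m Hm.
    apply Hn. apply (proj1 (Hy m)). auto. }
  assert (HxS : xi (seqF y) x).
  { exact (proj1 Hconv H _ x HH (seqF_filter y) HS Hx). }
  assert (Hsep : forall z, z <> x -> (forall n, z <> y n) ->
            exists del, 0 < del /\ forall n, del <= d z (y n)).
  { intros z Hzx Hzy.
    assert (Hfin : exists m N, forall n, (N <= n)%nat -> rr m <= d z (y n)).
    { apply NNPP. intros Hne. apply Hzx.
      set (G := fun A : X -> Prop => exists m N, forall n, (N <= n)%nat ->
                   d z (y n) < rr m -> A (y n)).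
      assert (HG : is_filter G).
      { split; [|split; [|split]].
        - exists 0%nat, 0%nat. auto.
        - intros A A' [m [N Hm]] HAA. exists m, N. auto.
        - intros A A' [m [N Hm]] [m' [N' Hm']]. exists (max m m'), (max N N').
          intros n Hn Hd. pose proof (rr_le m (max m m') ltac:(lia)).
          pose proof (rr_le m' (max m m') ltac:(lia)).
          split. apply Hm. lia. lra. apply Hm'. lia. lra.
        - intros [m [N Hm]]. apply Hne. exists m, N. intros n Hn.
          apply Rnot_lt_le. intros Hl. exact (Hm n Hn Hl). }
      assert (HSG : filter_le (seqF y) G).
      { intros A [N HN]. exists 0%nat, N. auto. }
      assert (HxG : xi G x) by exact (proj1 Hconv _ _ x (seqF_filter y) HG HSG HxS).
      assert (HzG : xi G z).
      { apply H1. exact HG. intros eps He. destruct (rr_small eps He) as [m Hm].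
        exists m, 0%nat. intros n _ Hl. unfold ball. lra. }
      exact (Hhaus G HG z x HzG HxG). }
    destruct Hfin as [m [N Hm]].
    assert (Hp : forall n, 0 < d z (y n)).
    { intros n. destruct (Hd0 z (y n)) as [Hlt|Heq]. auto.
      exfalso. apply (Hzy n). apply Hdz. auto. }
    destruct (finite_min d z y N Hp) as [del [Hdel Hdn]].
    exists (Rmin del (rr m)). split. apply Rmin_glb_lt; auto. apply rr_pos.
    intros n. destruct (Compare_dec.le_lt_dec N n) as [Hle|Hlt].
    - eapply Rle_trans. apply Rmin_r. auto.
    - eapply Rle_trans. apply Rmin_l. auto. }
  set (U := fun w => forall n, w <> y n).
  assert (HU : is_open (tilde d) U).
  { intros F HF w Hw Uw. destruct (classic (w = x)) as [->|Hwx].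
    - destruct HF as [_ [Hup _]]. apply (Hup (ball d x e0)). apply Hw; auto.
      intros v Hv n ->. apply (proj2 (Hy n)). auto.
    - destruct (Hsep w Hwx Uw) as [del [Hdel Hdn]].
      destruct HF as [_ [Hup _]]. apply (Hup (ball d w del)). apply Hw; auto.
      intros v Hv n ->. unfold ball in Hv. specialize (Hdn n). lra. }
  assert (Ux : U x).
  { intros n Heq. apply (proj2 (Hy n)). rewrite <- Heq. unfold ball.
    rewrite (proj2 (Hdz x x) eq_refl). auto. }
  destruct (H2 _ (seqF_filter y) x HxS U HU Ux) as [N HN].
  exact (HN N (le_n N) N eq_refl).
Qed.

Lemma tilde_I1 {X : Type} (xi : Lim X) (d : X -> X -> R) (Hd : is_semimetric d)
  (H1 : conv_ge (tilde d) xi) : conv_ge (tilde d) (I1 xi).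
Proof.
  intros F HF x Hx. exists (ballF d x). split. apply ballF_filter; auto.
  split. apply ballF_cb. split.
  - intros A [n Hn]. destruct HF as [_ [Hup _]]. apply (Hup (ball d x (rr n))).
    apply Hx. apply rr_pos. auto.
  - apply H1. apply ballF_filter; auto. apply ballF_tilde.
Qed.

Theorem corollary3p3 (X : Type) (xi : Lim X)
  (Hconv : is_convergence xi) (Hhaus : hausdorff xi) :
  symmetrizable xi <->
  (sequential xi /\ pretopology (I1 xi) /\ semi_metrizable (I1 xi)).
Proof.
  split.
  - intros [d [Hd [H1 H2]]].
    assert (HI : conv_ge (I1 xi) (tilde d)).
    { intros F HF x [H [HH [Hcb [Hle Hx]]]] eps He.
      apply Hle. apply (key xi d Hconv Hhaus Hd H1 H2 H x HH Hcb Hx eps He). }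
    split; [|split].
    + intros F HF x Hx O HO Ox. apply (H2 F HF x Hx O); auto.
      intros G HG w Hw Ow.
      assert (HN : ballF d w O).
      { apply (HO (ballF d w) (ballF_filter d w Hd) w); auto.
        apply tilde_I1 with (d := d); auto. apply ballF_filter; auto.
        apply ballF_tilde. }
      destruct HN as [n Hn]. destruct HG as [_ [Hup _]].
      apply (Hup (ball d w (rr n))). apply Hw. apply rr_pos. auto.
    + intros x. exists (ballF d x). split. apply ballF_filter; auto.
      split. apply ballF_cb. split.
      * intros A [n Hn] F HF HFx. pose proof HF as HF'. destruct HF' as [Ht [Hup _]].
        apply (Hup (ball d x (rr n))). apply (HI F); auto.
        apply rr_pos. auto.
      * apply H1. apply ballF_filter; auto. apply ballF_tilde.
    + exists d. split. auto. split. exact HI. apply tilde_I1; auto.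
  - intros [Hseq [_ [d [Hd [HI Hti]]]]].
    exists d. split. auto. split.
    + intros F HF x Hx. apply I1_ge; auto.
    + intros F HF x Hx O HO Ox. apply (Hseq F HF x Hx O); auto.
      intros G HG w Hw Ow. apply (HO G HG w); auto.
Qed.
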